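(* Let $(R,B)$ be an EIC problem with problem graph $G=(V,E)$, and let $\mathcal{A}_{(R,B)}$ be the image of its column repetition function. Then $$\omega(\overline{G})\le \mathrm{minrk}_2(G)\le \mathrm{rminrk}_2(G,\mathcal{A}_{(R,B)})\le \chi(\overline{G}).$$
   Context: An EIC problem is a pair $(R,B)$ of matrices in $\mathbb{F}_2^{n\times m}$ with disjoint supports (node $u$ needs block $a$ iff $R_{ua}=1$, has block $a$ iff $B_{ua}=1$). Requirement pairs: $P=\{(u,a):R_{ua}=1\}$. The problem graph $G=(V,E)$ is the directed graph with vertices $V=\{v_{(u,a)}:(u,a)\in P\}$ and an edge from $v_{(u,a)}$ to $v_{(w,b)}$ (for distinct vertices) iff $B_{ub}=1$ or $a=b$. A matrix $A'\in\mathbb{F}_2^{|V|\times|V|}$ (indexed by $V$) fits $G$ if all diagonal entries are $1$ and $A'_{xy}=0$ whenever $x\neq y$, $(x,y)\notin E$. $\mathrm{minrk}_2(G)$ is the minimum rank over $\mathbb{F}_2$ of a matrix fitting $G$. The column repetition function $\phi_{(R,B)}:\mathbb{F}_2^{|V|\times m}\to\mathbb{F}_2^{|V|\times|V|}$ sends $A$ (rows indexed by $V$) to the matrix whose column indexed by $v_{(u,a)}$ is the $a$-th column of $A$; $\mathcal{A}_{(R,B)}$ is its image, and $\mathrm{rminrk}_2(G,\mathcal{A}_{(R,B)})$ is the minimum rank of a matrix in $\mathcal{A}_{(R,B)}$ fitting $G$. For a directed graph $H$ (loops disregarded): its complement $\overline H$ has an edge $(x,y)$, $x\ne y$, iff $(x,y)$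 is not an edge of $H$; a clique is a vertex set in which every ordered pair of distinct vertices is an edge; $\omega(H)$ is the maximum clique size; an independent set is a vertex set containing no edge in either direction; $\chi(H)$ is the minimum number of parts in a partition of the vertices into independent sets. *)

(* Defs.v *)
From HB Require Import structures.
From mathcomp Require Import all_boot all_order all_algebra.
Set Implicit Arguments. Unset Strict Implicit. Unset Printing Implicit Defensive.
Import GRing.Theory.
Local Open Scope ring_scope.

Section Digraph.
Variable T : finType.
Variable e : rel T.

Definition compl : rel T := fun x y => (x != y) && ~~ e x y.

Definition clique (S : {set T}) : bool :=
  [forall x in S, forall y in S, (x != y) ==> e x y].

Definition indep (S : {set T}) : bool :=
  [forall x in S, forall y in S, (x != y) ==> ~~ e x y].

Definition omega : nat := \max_(S : {set T} | clique S) #|S|.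

(* minimum number of parts of a partition of the vertex set into
   independent sets (the default #|T| is never used: singletons work) *)
Definition chi : nat :=
  \big[minn/#|T|]_(P : {set {set T}} |
       partition P [set: T] && [forall S in P, indep S]) #|P|.
End Digraph.

Section EIC.
Variables n m : nat.
Variables R B : 'M['F_2]_(n, m).

(* vertices v_(u,a) for requirement pairs (u,a) with R_{ua} = 1 *)
Definition Vt := {p : 'I_n * 'I_m | R p.1 p.2 == 1}.

Definition pgraph : rel Vt := fun x y =>
  (x != y) && ((B (val x).1 (val y).2 == 1) || ((val x).2 == (val y).2)).

Definition nV : nat := #|{: Vt}|.

Definition vert (i : 'I_nV) : Vt := enum_val i.

Definition fits (A : 'M['F_2]_nV) : bool :=
  [forall i, A i i == 1] &&
  [forall i, forall j, ((i != j) && ~~ pgraph (vert i) (vert j)) ==> (A i j == 0)].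

Definition minrk2 : nat := \big[minn/nV]_(A : 'M['F_2]_nV | fits A) \rank A.

Definition colrep (A : 'M['F_2]_(nV, m)) : 'M['F_2]_nV :=
  \matrix_(i, j) A i (val (vert j)).2.

Definition rminrk2 : nat :=
  \big[minn/nV]_(A : 'M['F_2]_(nV, m) | fits (colrep A)) \rank (colrep A).
End EIC.
Arguments pgraph {n m} R B.

(* Main.v *)
Require Import Defs.
From mathcomp Require Import all_boot all_order all_algebra.
Local Open Scope ring_scope.
Set Implicit Arguments. Unset Strict Implicit.
Import GRing.Theory.

Lemma bigmin_le (I : finType) (P : pred I) (F : I -> nat) d i0 :
  P i0 -> (\big[minn/d]_(i | P i) F i <= F i0)%N.
Proof.
move=> Pi0; have : i0 \in index_enum I by rewrite mem_index_enum.
elim: (index_enum I) => [//|j r IH]; rewrite inE big_cons => /orP[/eqP<-|/IH H].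
  by rewrite Pi0 geq_minl.
by case: (P j) => //; exact: leq_trans (geq_minr _ _) H.
Qed.

Lemma bigmin_le_def (I : finType) (P : pred I) (F : I -> nat) d :
  (\big[minn/d]_(i | P i) F i <= d)%N.
Proof.
apply: (big_rec (fun x => x <= d)%N) => // i x _ Hx; exact: leq_trans (geq_minr _ _) Hx.
Qed.

Lemma le_bigmin (I : finType) (P : pred I) (F : I -> nat) d x :
  (x <= d)%N -> (forall i, P i -> x <= F i)%N -> (x <= \big[minn/d]_(i | P i) F i)%N.
Proof.
move=> Hd HF; apply: (big_ind (fun y => x <= y)%N) => // a b Ha Hb; by rewrite leq_min Ha Hb.
Qed.

Section Proofs.
Variables (n m : nat) (R B : 'M['F_2]_(n, m)).
Local Notation G := (pgraph R B).

Lemma vert_inj : injective (@vert _ _ R).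
Proof. exact: enum_val_inj. Qed.

Lemma part1 (S : {set Vt R}) (A : 'M['F_2]_(nV R)) :
  clique (compl G) S -> fits B A -> (#|S| <= \rank A)%N.
Proof.
move=> cS /andP[/forallP Hd /forallP Ho].
pose f (k : 'I_#|S|) : 'I_(nV R) := enum_rank (enum_val k).
have fK k : vert (f k) = enum_val k by rewrite /vert /f enum_rankK.
have finj : injective f.
  by move=> k1 k2 /(congr1 (@vert _ _ R)); rewrite !fK => /enum_val_inj.
have E : rowsub f (rowsub f A^T)^T = 1%:M.
  apply/matrixP=> i j; rewrite !mxE.
  case: (eqVneq i j) => [->|ij]; first by apply/eqP; apply: Hd.
  have fij : f i != f j by apply: contra_neq ij => /finj ->.
  apply/eqP; move/forallP: (Ho (f i)) => /(_ (f j)) /implyP; apply.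
  rewrite fij /=; move/forallP: cS => /(_ (enum_val i)) /implyP /(_ (enum_valP i)).
  move/forallP => /(_ (enum_val j)) /implyP /(_ (enum_valP j)) /implyP.
  rewrite !fK; have -> : enum_val i != enum_val j by apply: contra_neq ij => /enum_val_inj ->.
  by move=> /(_ isT) /andP[].
have := mxrank1 'F_2 #|S|; rewrite -E => <-.
apply: leq_trans (mxrankS (rowsub_sub _ _)) _.
by rewrite mxrank_tr; apply: leq_trans (mxrankS (rowsub_sub _ _)) _; rewrite mxrank_tr.
Qed.

Lemma part3 (P : {set {set Vt R}}) :
  partition P [set: Vt R] -> [forall S in P, indep (compl G) S] ->
  exists A : 'M['F_2]_(nV R, m), fits B (colrep A) && (\rank (colrep A) <= #|P|)%N.
Proof.
move=> /and3P[/eqP cov _ _] /forall_inP Hind.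
have SP x : pblock P x \in P by apply: pblock_mem; rewrite cov inE.
have xS x : x \in pblock P x by rewrite mem_pblock cov inE.
pose D : 'M['F_2]_(nV R, #|P|) := \matrix_(i < nV R, k < #|P|) (enum_val (A:=P) k == pblock P (vert i))%:R.
pose E : 'M['F_2]_(#|P|, m) := \matrix_(k < #|P|, c < m) [exists z in enum_val (A:=P) k, (val z).2 == c]%:R.
pose F : 'M['F_2]_(#|P|, nV R) :=
  \matrix_(k < #|P|, j < nV R) [exists z in enum_val (A:=P) k, (val z).2 == (val (vert j)).2]%:R.
have DE i c : (D *m E) i c = [exists z in pblock P (vert i), (val z).2 == c]%:R.
  rewrite mxE (bigD1 (enum_rank_in (SP (vert i)) (pblock P (vert i)))) //=.
  rewrite big1 ?addr0.
    by rewrite !mxE enum_rankK_in ?SP // eqxx mul1r.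
  move=> k nk; rewrite !mxE.
  case: eqP => [ek|_]; last by rewrite mul0r.
  have := enum_valK_in (SP (vert i)) k; rewrite ek => e; by rewrite e eqxx in nk.
exists (D *m E); apply/andP; split.
  apply/andP; split.
    apply/forallP=> i; rewrite mxE DE (_ : [exists _ in _, _] = true) //.
    by apply/exists_inP; exists (vert i).
  apply/forallP=> i; apply/forallP=> j; apply/implyP=> /andP[ij nG].
  rewrite mxE DE (_ : [exists _ in _, _] = false) //; apply/negbTE/exists_inP => [[z zS /eqP zb]].
  have vij : vert i != vert j by apply: contra_neq ij => /vert_inj.
  move/negP: nG; apply; rewrite /pgraph vij /=.
  case: (eqVneq z (vert i)) => [ez|nz].
    by apply/orP; right; rewrite -zb ez.
  move/forallP: (Hind _ (SP (vert i))) => /(_ (vert i)) /implyP /(_ (xS _)).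
  move/forallP => /(_ z) /implyP /(_ zS) /implyP; rewrite eq_sym nz => /(_ isT).
  rewrite /compl => /nandP[/negPn/eqP e|/negPn].
    by rewrite e eqxx in nz.
  by rewrite /pgraph -zb => /andP[_].
have -> : colrep (D *m E) = D *m F.
  by apply/matrixP=> i j; rewrite !mxE; apply: eq_bigr => k _; rewrite !mxE.
exact: leq_trans (mxrankM_maxl _ _) (rank_leq_col _).
Qed.

End Proofs.

Theorem corollary1 (n m : nat) (R B : 'M['F_2]_(n, m))
  (disj : forall (u : 'I_n) (a : 'I_m), R u a = 0 \/ B u a = 0) :
  [/\ (omega (compl (pgraph R B)) <= minrk2 R B)%N,
      (minrk2 R B <= rminrk2 R B)%N &
      (rminrk2 R B <= chi (compl (pgraph R B)))%N].
Proof.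
split.
- apply/bigmax_leqP => S cS. rewrite /minrk2.
  have H := @le_bigmin _ (fits B) (fun A => \rank A) (nV R) #|S|.
  apply: H. 
    exact: (max_card S).
  move=> A fA; exact: (part1 cS fA).
- rewrite /rminrk2.
  have H := @le_bigmin _ (fun A => fits B (colrep A)) (fun A => \rank (colrep A)) (nV R) (minrk2 R B).
  apply: H; first exact: bigmin_le_def.
  move=> A fA; rewrite /minrk2.
  exact: (@bigmin_le _ (fits B) (fun A => \rank A) (nV R) _ fA).
- rewrite /chi.
  have H := @le_bigmin _ (fun P : {set {set Vt R}} => partition P [set: Vt R] && [forall S in P, indep (compl (pgraph R B)) S]) (fun P => #|P|) #|{: Vt R}| (rminrk2 R B).
  apply: H; first exact: bigmin_le_def.
  move=> P /andP[pP iP]; have [A /andP[fA rA]] := part3 pP iP.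
  apply: leq_trans rA; rewrite /rminrk2.
  exact: (@bigmin_le _ (fun A => fits B (colrep A)) (fun A => \rank (colrep A)) (nV R) _ fA).
Qed.
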